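(* Let $F=F(a,b)$ be the free group on generators $a,b$. For every $n\ge 1$, $$[[a,_{2n}b],a]\equiv\Big[\prod_{i=0}^{n-1}\big[[a,_{2n-1-i}b],[a,_ib]\big]^{(-1)^i},\ b\Big]\mod\gamma_{2n+3}(F).$$
   Context: For group elements, $[x,y]=x^{-1}y^{-1}xy$; commutators are left-normalized, $[x_1,\dots,x_n]=[[x_1,\dots,x_{n-1}],x_n]$, and $[x,_0y]=x$, $[x,_{i+1}y]=[[x,_iy],y]$. $\gamma_k(F)$ is the lower central series: $\gamma_1(F)=F$, $\gamma_{k+1}(F)=[\gamma_k(F),F]$. *)

(* Defs.v *)
From mathcomp Require Import all_boot.

Set Implicit Arguments.
Unset Strict Implicit.
Unset Printing Implicit Defensive.

(* A letter: (generator, inverted?) ; generator false = a, true = b. *)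
Definition letter := (bool * bool)%type.
Definition lflip (l : letter) : letter := (l.1, ~~ l.2).

Definition reduced (w : seq letter) : bool :=
  if w is x :: s then path (fun x y => y != lflip x) x s else true.

Definition push (l : letter) (w : seq letter) : seq letter :=
  if w is y :: s then (if y == lflip l then s else l :: w) else [:: l].

Lemma reduced_push l w : reduced w -> reduced (push l w).
Proof.
case: w => [|y s] //=.
case: eqP => [_|ne] /=.
  by case: s => [|z s] //= /andP[].
by move=> p; rewrite p andbT; apply/eqP.
Qed.

Definition FG := {w : seq letter | reduced w}.

Definition fg_mul_word (u v : seq letter) := foldr push v u.
Lemma reduced_mul u v : reduced v -> reduced (fg_mul_word u v).
Proof. by elim: u => [|l u IH] //= rv; apply: reduced_push; apply: IH. Qed.
Definition fg_mul (x y : FG) : FG :=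
  exist _ (fg_mul_word (proj1_sig x) (proj1_sig y)) (reduced_mul _ (proj2_sig y)).

Definition fg_inv_word (u : seq letter) :=
  foldl (fun acc l => push (lflip l) acc) [::] u.
Lemma reduced_inv u : reduced (fg_inv_word u).
Proof.
rewrite /fg_inv_word; have : reduced [::] by [].
elim: u [::] => [|l u IH] acc //= r; apply: IH; exact: reduced_push.
Qed.
Definition fg_inv (x : FG) : FG := exist _ (fg_inv_word (proj1_sig x)) (reduced_inv _).

Definition fg_one : FG := exist _ [::] isT.
Definition fg_a : FG := exist _ [:: (false, false)] isT.
Definition fg_b : FG := exist _ [:: (true, false)] isT.

Definition fg_comm (x y : FG) : FG :=
  fg_mul (fg_inv x) (fg_mul (fg_inv y) (fg_mul x y)).

Definition fg_citer (i : nat) (x y : FG) : FG := iter i (fun z => fg_comm z y) x.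

Inductive fg_gen (P : FG -> Prop) : FG -> Prop :=
  | fg_gen_base x : P x -> fg_gen P x
  | fg_gen_one : fg_gen P fg_one
  | fg_gen_mul x y : fg_gen P x -> fg_gen P y -> fg_gen P (fg_mul x y)
  | fg_gen_inv x : fg_gen P x -> fg_gen P (fg_inv x).

(* Lower central series: gamma_1(F) = F, gamma_(k+1)(F) = [gamma_k(F), F]
   (the subgroup generated by the commutators [x,y], x in gamma_k(F), y in F).
   gamma_0 is set to F by convention (unused). *)
Fixpoint fg_gamma (k : nat) : FG -> Prop :=
  match k with
  | 0 => fun _ => True
  | 1 => fun _ => True
  | S k' => fg_gen (fun z => exists x y, fg_gamma k' x /\ z = fg_comm x y)
  end.

Definition fg_congr (k : nat) (x y : FG) : Prop := fg_gamma k (fg_mul (fg_inv x) y).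

Definition fg_prod (n : nat) (f : nat -> FG) : FG :=
  foldr (fun i acc => fg_mul (f i) acc) fg_one (iota 0 n).

Definition fg_sgnpow (i : nat) (x : FG) : FG := if odd i then fg_inv x else x.

(* Main.v *)
Require Import Defs.
From HB Require Import structures.
From mathcomp Require Import all_boot.
Set Implicit Arguments. Unset Strict Implicit. Unset Printing Implicit Defensive.
HB.instance Definition _ := Choice.copy FG {w : seq letter | reduced w}.

Lemma lflipK : involutive lflip.
Proof. by case=> x y; rewrite /lflip /= negbK. Qed.

Lemma push_cancel l w : reduced w -> push l (push (lflip l) w) = w.
Proof.
case: w => [|y s] /=; first by rewrite /= eqxx.
rewrite lflipK; case: (y =P l) => [->|ne] /=.
  case: s => [|z s] //= /andP[nz _]; by rewrite (negbTE nz).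
by rewrite eqxx.
Qed.

Lemma push_cancel' l w : reduced w -> push (lflip l) (push l w) = w.
Proof. by move=> rw; have := push_cancel (lflip l) rw; rewrite lflipK. Qed.

Lemma push_mul l v w : reduced w ->
  fg_mul_word (push l v) w = push l (fg_mul_word v w).
Proof.
move=> rw; case: v => [|y s] //=.
case: (y =P lflip l) => [->|ne] //=.
by rewrite push_cancel // reduced_mul.
Qed.

Lemma mul_wordA u v w : reduced w ->
  fg_mul_word (fg_mul_word u v) w = fg_mul_word u (fg_mul_word v w).
Proof.
move=> rw; elim: u => [|l u IH] //=.
by rewrite push_mul // IH.
Qed.

Lemma mul_word1 u : reduced u -> fg_mul_word u [::] = u.
Proof.
elim: u => [|l u IH] //= ru.
have ru' : reduced u by case: u ru {IH} => [|y s] //= /andP[].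
rewrite IH //; case: u ru ru' {IH} => [|y s] //= /andP[ny _] _.
by rewrite (negbTE ny).
Qed.

Lemma inv_wordE acc u :
  foldl (fun acc l => push (lflip l) acc) acc u = fg_mul_word (map lflip (rev u)) acc.
Proof.
elim: u acc => [|l u IH] acc //=.
by rewrite IH rev_cons map_rcons /fg_mul_word foldr_rcons.
Qed.

Lemma inv_wordK u w : reduced w ->
  fg_mul_word (map lflip (rev u)) (fg_mul_word u w) = w.
Proof.
move=> rw; elim: u => [|l u IH] //=.
rewrite rev_cons map_rcons /fg_mul_word foldr_rcons /=.
by rewrite push_cancel' ?reduced_mul.
Qed.

Lemma fgP (x y : FG) : proj1_sig x = proj1_sig y -> x = y.
Proof. by move=> e; apply: val_inj. Qed.

Lemma fg_mulA : associative fg_mul.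
Proof. by move=> x y z; apply: fgP => /=; rewrite mul_wordA //; case: z. Qed.
Lemma fg_mul1 : left_id fg_one fg_mul.
Proof. by move=> x; apply: fgP. Qed.
Lemma fg_mulg1 : right_id fg_one fg_mul.
Proof. by move=> x; apply: fgP => /=; rewrite mul_word1 //; case: x. Qed.
Lemma fg_mulV : left_inverse fg_one fg_inv fg_mul.
Proof.
case=> u ru; apply: fgP => /=; rewrite /fg_inv_word inv_wordE mul_wordA //=.
by rewrite -{2}(mul_word1 ru) inv_wordK.
Qed.
Lemma fg_mulgV : right_inverse fg_one fg_inv fg_mul.
Proof.
move=> x; rewrite -{1}(fg_mul1 (fg_mul x (fg_inv x))) -{1}(fg_mulV (fg_inv x)).
by rewrite -fg_mulA (fg_mulA (fg_inv x) x) fg_mulV fg_mul1 fg_mulV.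
Qed.

HB.instance Definition _ := isGroup.Build FG fg_mulA fg_mul1 fg_mulg1 fg_mulV fg_mulgV.

Local Open Scope group_scope.

Section GT.
Variable G : groupType.
Implicit Types x y z : G.
Lemma hallwitt x y z :
  [~ [~ x, y^-1], z] ^ y * [~ [~ y, z^-1], x] ^ z * [~ [~ z, x^-1], y] ^ x = 1.
Proof. by rewrite /commg /conjg !invgM ?invgK !mulgA ?(mulgK, mulgVK) mulVg. Qed.
Lemma commMg x y z : [~ x * y, z] = [~ x, z] ^ y * [~ y, z].
Proof. by rewrite /commg /conjg !invgM ?invgK !mulgA ?(mulgK, mulgVK). Qed.
Lemma commgM x y z : [~ x, y * z] = [~ x, z] * [~ x, y] ^ z.
Proof. by rewrite /commg /conjg !invgM ?invgK !mulgA ?(mulgK, mulgVK). Qed.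
End GT.
From mathcomp Require Import zify.

Notation gam := fg_gamma.
Implicit Types x y z g : FG.

Lemma gam1 k : gam k 1.
Proof. by case: k => [|[|k]] //=; apply: fg_gen_one. Qed.
Lemma gamM k x y : gam k x -> gam k y -> gam k (x * y).
Proof. by case: k => [|[|k]] //=; apply: fg_gen_mul. Qed.
Lemma gamV k x : gam k x -> gam k x^-1.
Proof. by case: k => [|[|k]] //=; apply: fg_gen_inv. Qed.
Lemma gamR k x y : 0 < k -> gam k x -> gam k.+1 [~ x, y].
Proof. by case: k => [|k] // _ gx; apply: fg_gen_base; exists x, y. Qed.

Lemma gamJ k x g : gam k x -> gam k (x ^ g).
Proof.
case: k => [|[|k]] //= H; elim: H => {x} [z [x [y [gx ->]]]| |x y _ Hx _ Hy|x _ Hx].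
- have -> : [~ x, y] ^ g = [~ x, g]^-1 * [~ x, y * g].
    by rewrite commgM mulgA mulVg mul1g.
  apply: fg_gen_mul; [apply: fg_gen_inv|]; apply: fg_gen_base.
    by exists x, g.
  by exists x, (y * g).
- by rewrite conj1g; apply: fg_gen_one.
- by rewrite conjMg; apply: fg_gen_mul.
- by rewrite conjVg; apply: fg_gen_inv.
Qed.

Lemma gamE k : gam k.+2 = fg_gen (fun z => exists x y, gam k.+1 x /\ z = fg_comm x y).
Proof. by []. Qed.

Lemma gamS k x : gam k.+1 x -> gam k x.
Proof.
case: k => [|k] //; rewrite gamE => H; elim: H => {x} [z [x [y [gx ->]]]| |x y _ Hx _ Hy|x _ Hx].
- have -> : fg_comm x y = [~ x, y] by [].
  by rewrite commgEl; apply: gamM; [apply: gamV|apply: gamJ].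
- exact: gam1.
- exact: gamM.
- exact: gamV.
Qed.

Lemma gam_le i j x : i <= j -> gam j x -> gam i x.
Proof.
move=> /subnK <-; elim: (j - i) => [|d IH] H //.
by apply: IH; apply: gamS; rewrite -addSn.
Qed.

Lemma gamRR j i x w : 0 < i -> 0 < j -> gam i x -> gam j w -> gam (i + j) [~ x, w].
Proof.
elim: j i x w => [|j IH] i x w // i0 _ gx.
case: j IH => [|j] IH.
  by move=> _; rewrite addn1; apply: gamR.
rewrite gamE => H; elim: H => {w} [z [y [u [gy ->]]]| |w1 w2 _ H1 _ H2|w _ Hw].
- have hw := hallwitt y u^-1 x; rewrite invgK in hw.
  set A := _ ^ u^-1 in hw; set B := _ ^ x in hw; set C := _ ^ y in hw.
  have gC : gam (i + j.+2) C.
    apply: gamJ; rewrite addnS; apply: gamR; first by rewrite addnS.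
    by apply: IH => //; apply: gamV.
  have gB : gam (i + j.+2) B.
    apply: gamJ; rewrite -addSnnS; apply: IH => //.
    by rewrite -invgR; apply: gamV; apply: gamR => //; apply: gamV.
  have gA : gam (i + j.+2) A.
    have -> : A = (B * C)^-1.
      by apply: (@mulIg _ (B * C)); rewrite mulVg mulgA hw.
    by apply: gamV; apply: gamM.
  have -> : fg_comm y u = [~ y, u] by [].
  rewrite -invgR; apply: gamV.
  by rewrite -[X in gam _ X](conjgKV u); apply: gamJ.
- by rewrite (_ : fg_one = 1) // commg1; apply: gam1.
- by rewrite (_ : fg_mul w1 w2 = w1 * w2) // commgM; apply: gamM => //; apply: gamJ.
- rewrite (_ : fg_inv w = w^-1) //.
  have e := commgM x w w^-1; rewrite mulgV commg1 in e.
  rewrite -[X in gam _ X](mulgK ([~ x, w] ^ w^-1)) -e mul1g.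
  by apply: gamV; apply: gamJ.
Qed.

Definition cg K x y := gam K (x^-1 * y).

Lemma cg_refl K x : cg K x x.
Proof. by rewrite /cg mulVg; apply: gam1. Qed.
Lemma cg_sym K x y : cg K x y -> cg K y x.
Proof. by rewrite /cg => /gamV; rewrite invgM invgK. Qed.
Lemma cg_trans K x y z : cg K x y -> cg K y z -> cg K x z.
Proof.
rewrite /cg => H1 H2; have := gamM H1 H2.
by rewrite -mulgA (mulgA y) mulgV mul1g.
Qed.
Lemma cgM K x x' y y' : cg K x x' -> cg K y y' -> cg K (x * y) (x' * y').
Proof.
rewrite /cg => H1 H2; have := gamM (gamJ y H1) H2.
by rewrite /conjg invgM !mulgA mulgK.
Qed.
Lemma cgV K x x' : cg K x x' -> cg K x^-1 x'^-1.
Proof.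
rewrite /cg => H; have := gamJ x^-1 (gamV H).
by rewrite /conjg invgM !invgK !mulgA mulgK.
Qed.
Lemma cg1 K w : gam K w -> cg K w 1.
Proof. by rewrite /cg mulg1; apply: gamV. Qed.

Lemma cgJ K k m u g : 0 < k -> 0 < m -> K <= k + m -> gam k u -> gam m g -> cg K u (u ^ g).
Proof.
move=> k0 m0 le gu gg; rewrite /cg -commgEl.
by apply: (gam_le le); apply: gamRR.
Qed.
Lemma cgC K k m u g : 0 < k -> 0 < m -> K <= k + m -> gam k u -> gam m g -> cg K (u * g) (g * u).
Proof.
move=> k0 m0 le gu gg; rewrite /cg invgM !mulgA.
have -> : g^-1 * u^-1 * g * u = [~ g, u] by rewrite /commg /conjg !mulgA.
by apply: (gam_le le); rewrite addnC; apply: gamRR.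
Qed.

Lemma keyR p q x y b : 0 < p -> 0 < q -> gam p x -> gam q y ->
  cg (p + q + 2) [~ [~ x, y], b] ([~ x, [~ y, b]] * [~ [~ x, b], y]).
Proof.
move=> p0 q0 gx gy.
have E : [~ [~ x, y], b] = [~ x, y]^-1 * (([~ x, [~ y, b]] * [~ x, y] ^ [~ y, b]) ^ [~ x, b] *
   ([~ [~ x, b], [~ y, b]] * [~ [~ x, b], y] ^ [~ y, b])).
  rewrite {1}commgEl conjRg.
  have -> : x ^ b = x * [~ x, b] by rewrite commgEl mulVKg.
  have -> : y ^ b = y * [~ y, b] by rewrite commgEl mulVKg.
  by rewrite commMg !commgM.
rewrite E.
set u := [~ x, b]; set v := [~ y, b].
set X := [~ x, v]; set Y := [~ x, y]; set Z := [~ u, y]; set W := [~ u, v].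
have gu : gam p.+1 u by apply: gamR.
have gv : gam q.+1 v by apply: gamR.
have gY : gam (p + q) Y by apply: gamRR.
have gX : gam (p + q).+1 X by rewrite -addnS; apply: gamRR.
have gZ : gam (p + q).+1 Z by rewrite -addSn; apply: gamRR.
have gW : gam (p + q + 2) W.
  by rewrite (_ : p + q + 2 = p.+1 + q.+1); [apply: gamRR | lia].
apply: (@cg_trans _ _ (Y^-1 * (X * Y * Z))).
  apply: cgM; first exact: cg_refl.
  apply: cgM.
    apply: cg_sym; apply: (@cg_trans _ _ (X * Y ^ v)).
      apply: cgM; first exact: cg_refl.
      by apply: (@cgJ _ (p + q) q.+1) => //; lia.
    apply: (@cgJ _ (p + q) p.+1) => //; [by clear -p0; lia | by clear -p0; lia |].
    by apply: gamM; [apply: (gam_le _ gX) | apply: gamJ].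
  apply: (@cg_trans _ _ (1 * Z ^ v)).
    by apply: cgM; [exact: cg1 | exact: cg_refl].
  rewrite mul1g; apply: cg_sym; apply: (@cgJ _ (p + q).+1 q.+1) => //.
  by clear -p0; lia.
rewrite (mulgA Y^-1 (X * Y) Z) (mulgA Y^-1 X Y).
apply: cgM => //; last exact: cg_refl.
apply: cg_sym; rewrite -mulgA; apply: (@cgJ _ (p + q).+1 (p + q) X Y) => //; first by rewrite addn_gt0 p0.
by clear -p0 q0; lia.
Qed.

Lemma prod0 f : fg_prod 0 f = 1. Proof. by []. Qed.
Lemma prodS m f : fg_prod m.+1 f = fg_prod m f * f m.
Proof.
rewrite /fg_prod -addn1 iotaD foldr_cat /=.
have gen : forall (s : seq nat) y, foldr (fun i acc => fg_mul (f i) acc) y s =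
    foldr (fun i acc => fg_mul (f i) acc) fg_one s * y.
  move=> s y; elim: s => [|i s IH] /=; first exact: (esym (mul1g y)).
  by rewrite IH; apply: mulgA.
by rewrite gen (_ : fg_mul (f m) fg_one = f m * 1) // mulg1.
Qed.
Lemma sgE i x : fg_sgnpow i x = if odd i then x^-1 else x. Proof. by []. Qed.

Lemma gam_prod k m f : (forall i, i < m -> gam k (f i)) -> gam k (fg_prod m f).
Proof.
elim: m => [|m IH] H; first exact: gam1.
by rewrite prodS; apply: gamM; [apply: IH => i lt; apply: H; apply: ltnW | apply: H].
Qed.
Lemma gam_sg k i x : gam k x -> gam k (fg_sgnpow i x).
Proof. by rewrite sgE; case: (odd i) => //; apply: gamV. Qed.
Lemma cg_sg K i x y : cg K x y -> cg K (fg_sgnpow i x) (fg_sgnpow i y).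
Proof. by rewrite !sgE; case: (odd i) => //; apply: cgV. Qed.
Lemma cg_prod K m (f h : nat -> FG) : (forall i, i < m -> cg K (f i) (h i)) -> cg K (fg_prod m f) (fg_prod m h).
Proof.
elim: m => [|m IH] H; first exact: cg_refl.
by rewrite !prodS; apply: cgM; [apply: IH => i lt; apply: H; apply: ltnW | apply: H].
Qed.

Lemma prodR k m f b : 0 < k -> (forall i, i < m -> gam k (f i)) ->
  cg (k + 2) [~ fg_prod m f, b] (fg_prod m (fun i => [~ f i, b])).
Proof.
move=> k0; elim: m => [|m IH] H.
  by rewrite !prod0 comm1g; apply: cg_refl.
rewrite !prodS commMg; apply: cgM; last exact: cg_refl.
apply: cg_trans (IH (fun i lt => H i (ltnW lt))).
apply: cg_sym; apply: (@cgJ _ k.+1 k) => //.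
- by clear -k0; lia.
- by apply: gamR => //; apply: gam_prod => i lt; apply: H; apply: ltnW.
- exact: H.
Qed.

Lemma sgR k i z b : 0 < k -> gam k z ->
  cg (k + 2) [~ fg_sgnpow i z, b] (fg_sgnpow i [~ z, b]).
Proof.
move=> k0 gz; rewrite !sgE; case: (odd i); last exact: cg_refl.
have e := commMg z z^-1 b; rewrite mulgV comm1g in e.
have -> : [~ z^-1, b] = ([~ z, b] ^ z^-1)^-1.
  by apply: (@mulgI _ ([~ z, b] ^ z^-1)); rewrite mulgV -e.
apply: cgV; apply: cg_sym; apply: (@cgJ _ k.+1 k) => //.
- by clear -k0; lia.
- exact: gamR.
- exact: gamV.
Qed.

Lemma tele K k M (A B : nat -> FG) : 0 < k -> K <= k + k ->
  (forall i, i < M -> gam k (A i)) -> gam k (B 0) ->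
  (forall i, i.+1 < M -> B i.+1 = A i) ->
  forall m, m < M -> cg K (fg_prod m.+1 (fun i => fg_sgnpow i (A i * B i)%g)) (B 0 * fg_sgnpow m (A m)).
Proof.
move=> k0 le gA gB eB; elim=> [|m IH] lt.
  rewrite prodS prod0 mul1g !sgE /=.
  by apply: (@cgC _ k k) => //; apply: gA.
rewrite prodS eB //; apply: cg_trans (cgM (IH (ltnW lt)) (cg_refl _ _)) _.
rewrite !sgE /=; case: (odd m) => /=.
  rewrite -mulgA; apply: cgM; first exact: cg_refl.
  apply: cg_sym; apply: (@cgJ _ k k) => //; apply: gA => //.
  exact: ltnW.
by rewrite invgM mulgA mulgK; apply: cg_refl.
Qed.

Local Close Scope group_scope.
Definition c i := fg_citer i fg_a fg_b.
Lemma cS i : c i.+1 = [~ c i, fg_b]%g. Proof. by []. Qed.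
Lemma gam_c i : gam i.+1 (c i).
Proof. by elim: i => [|i IH] //; rewrite cS; apply: gamR. Qed.

Theorem corollary4p1 (n : nat) (hn : 1 <= n) :
  fg_congr (2 * n + 3)
    (fg_comm (fg_citer (2 * n) fg_a fg_b) fg_a)
    (fg_comm
       (fg_prod n (fun i =>
          fg_sgnpow i (fg_comm (fg_citer (2 * n - 1 - i) fg_a fg_b)
                               (fg_citer i fg_a fg_b))))
       fg_b).
Proof.
set A := fun i => [~ c (2 * n - 1 - i), c i.+1]%g.
set B := fun i => [~ c (2 * n - 1 - i).+1, c i]%g.
have main : cg (2 * n + 3) [~ c (2 * n), fg_a]%g
   [~ fg_prod n (fun i => fg_sgnpow i [~ c (2 * n - 1 - i), c i]%g), fg_b]%g.
  apply: cg_sym.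
  have K : 2 * n + 3 = (2 * n + 1) + 2 by rewrite -addnA.
  apply: cg_trans.
    rewrite K; apply: prodR; first by rewrite addn1.
    move=> i lt; apply: gam_sg.
    have -> : 2 * n + 1 = (2 * n - 1 - i).+1 + i.+1 by clear -lt; lia.
    by apply: gamRR => //; apply: gam_c.
  apply: cg_trans.
    apply: (@cg_prod _ n _ (fun i => fg_sgnpow i (A i * B i)%g)) => i lt.
    apply: cg_trans.
      rewrite K; apply: sgR; first by rewrite addn1.
      have -> : 2 * n + 1 = (2 * n - 1 - i).+1 + i.+1 by clear -lt; lia.
      by apply: gamRR => //; apply: gam_c.
    apply: cg_sg.
    have -> : 2 * n + 3 = (2 * n - 1 - i).+1 + i.+1 + 2 by clear -lt; lia.
    by apply: keyR => //; apply: gam_c.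
  have B0 : B 0 = [~ c (2 * n), fg_a]%g.
    by rewrite /B subn0 (_ : (2 * n - 1).+1 = 2 * n) //; clear -hn; lia.
  have An : A n.-1 = 1%g.
    rewrite /A (_ : 2 * n - 1 - n.-1 = n); last by clear -hn; lia.
    by rewrite prednK // commgg.
  have k0 : 0 < 2 * n + 2 by rewrite addn2.
  have le : 2 * n + 3 <= 2 * n + 2 + (2 * n + 2) by clear; lia.
  have gA : forall i, i < n -> gam (2 * n + 2) (A i).
    move=> i lt; rewrite /A.
    have -> : 2 * n + 2 = (2 * n - 1 - i).+1 + i.+2 by clear -lt; lia.
    by apply: gamRR => //; apply: gam_c.
  have gB : gam (2 * n + 2) (B 0).
    rewrite B0 (_ : 2 * n + 2 = (2 * n).+1 + 1); last by clear; lia.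
    by apply: gamRR => //; apply: gam_c.
  have eB : forall i, i.+1 < n -> B i.+1 = A i.
    move=> i lt; rewrite /A /B.
    by rewrite (_ : (2 * n - 1 - i.+1).+1 = 2 * n - 1 - i) //; clear -lt; lia.
  have lt : n.-1 < n by rewrite prednK.
  have := tele k0 le gA gB eB lt.
  rewrite prednK // An sgE; case: (odd n.-1); rewrite ?invg1 mulg1 B0 //.
exact: main.
Qed.
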